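(* Let $\mathcal G=(\mathcal V,\mathcal E)$ be a digraph (network) and $u\in\mathcal V$ an agent executing Phase 1 of the protocol described in the context (not counting steps that call other phases). Then the time-complexity of Phase 1 for agent $u$ is $\mathcal O(\max\{|\mathcal N^-(u)||\mathcal E|,\ |\mathcal V|+|\mathcal E|\})$, where $\mathcal N^-(u)=\{v:(v,u)\in\mathcal E\}$.
   Context: Agents are the nodes of a digraph $(\mathcal V,\mathcal E)$, with unique integer IDs, each knowing its in- and out-neighbors, communicating synchronously along edges ($v$ receives from $u$ if $(u,v)\in\mathcal E$). Phase 1 for agent $u$: $u$ initially knows the set of its outgoing edges $\{(u,v):(u,v)\in\mathcal E\}$; repeatedly, it sends the edges newly learned in the previous step to all its out-neighbors and adds to its known set all edges received from its in-neighbors, until no new edges are learned. Then $u$ computes, with Tarjan's algorithm, the strongly connected components (SCCs) of the digraph formed by its known edges, and classifies its own SCC $\mathcal S$ as a source (no known edge from outside $\mathcal S$ into $\mathcal S$), a target (no known edge from $\mathcal S$ to outside), mixed (both kinds exist) or isolated (neither exists), and then decides which phase to go to next. *)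

(* Defs.v *)
From mathcomp Require Import all_boot.
Set Implicit Arguments. Unset Strict Implicit. Unset Printing Implicit Defensive.

Section Network.
Variables (T : finType) (E : rel T).

Definition edges : {set T * T} := [set e | E e.1 e.2].
Definition in_nbrs (u : T) : {set T} := [set v | E v u].

(* Synchronous execution of the edge-flooding step of Phase 1, for all agents.
   know t = (K_t, N_t) where K_t v is the set of edges known to v after t steps
   and N_t v the set of edges newly learned by v at step t
   (N_0 v = K_0 v = the outgoing edges of v). At step t+1, agent v receives
   N_t w from every in-neighbour w, and sends N_t v to its out-neighbours. *)
Fixpoint know (t : nat) : (T -> {set T * T}) * (T -> {set T * T}) :=
  match t with
  | 0 => let K0 := fun v => [set e in edges | e.1 == v] in (K0, K0)
  | t'.+1 =>
      let: (K, N) := know t' in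
      let K' := fun v => K v :|: \bigcup_(w | E w v) N w in
      (K', fun v => K' v :\: K v)
  end.

Definition known (t : nat) (v : T) : {set T * T} := (know t).1 v.
Definition newly (t : nat) (v : T) : {set T * T} := (know t).2 v.

(* Agent u stops after the first step t+1 in which it learns no new edge, i.e.
   the least t with known (t+1) u = known t u (it exists below #|T|^2 + 1, since
   the known sets increase inside a set with at most #|T|^2 elements). *)
Definition stop_time (u : T) : nat :=
  find (fun t => known t.+1 u == known t u) (iota 0 (#|T| ^ 2).+1).

Definition final_known (u : T) : {set T * T} := known (stop_time u) u.

(* Cost of the flooding part: each of the steps 1 .. stop_time u + 1 costs one unit
   of overhead, one unit per edge u sends (as one broadcast message), and one unit
   per edge received from each in-neighbour (including duplicates). *)
Definition flood_cost (u : T) : nat :=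
  \sum_(t < (stop_time u).+1)
     (1 + #|newly t u| + \sum_(w | E w u) #|newly t w|).

End Network.

Section Tarjan.
Variables (T : finType) (K : {set T * T}).

Record tstate := TState {
  t_idx : T -> option nat;
  t_low : T -> nat;
  t_stk : seq T;             (* Tarjan stack (head = top) *)
  t_cnt : nat;
  t_comps : seq (seq T);
  t_ops : nat
}.

Definition upd {A : Type} (f : T -> A) (x : T) (a : A) : T -> A :=
  fun y => if y == x then a else f y.

Definition tick (s : tstate) : tstate :=
  TState (t_idx s) (t_low s) (t_stk s) (t_cnt s) (t_comps s) (t_ops s).+1.

Definition set_low (v : T) (n : nat) (s : tstate) : tstate :=
  TState (t_idx s) (upd (t_low s) v n) (t_stk s) (t_cnt s) (t_comps s) (t_ops s).

Definition adj (v : T) : seq T := [seq w <- enum T | (v, w) \in K].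

Definition kvertices (u : T) : seq T :=
  [seq x <- enum T | (x == u) || [exists y, ((x, y) \in K) || ((y, x) \in K)]].

Definition pop_comp (v : T) (s : tstate) : tstate :=
  let c := take (index v (t_stk s)).+1 (t_stk s) in
  TState (t_idx s) (t_low s) (drop (index v (t_stk s)).+1 (t_stk s))
         (t_cnt s) (c :: t_comps s) (t_ops s + size c).

Fixpoint strongconnect (fuel : nat) (v : T) (s : tstate) : tstate :=
  match fuel with
  | 0 => s
  | f.+1 =>
    let s1 := TState (upd (t_idx s) v (Some (t_cnt s))) (upd (t_low s) v (t_cnt s))
                     (v :: t_stk s) (t_cnt s).+1 (t_comps s) (t_ops s).+1 in
    let s2 := foldl (fun st w =>
                 let st := tick st in
                 match t_idx st w with
                 | None => let st' := strongconnect f w st in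
                           set_low v (minn (t_low st' v) (t_low st' w)) st'
                 | Some iw => if w \in t_stk st
                              then set_low v (minn (t_low st v) iw) st else st
                 end) s1 (adj v) in
    if t_idx s2 v == Some (t_low s2 v) then pop_comp v s2 else s2
  end.

Definition tarjan_init : tstate :=
  TState (fun _ => None) (fun _ => 0) [::] 0 [::] 0.

Definition tarjan (vs : seq T) : tstate :=
  foldl (fun st v => let st := tick st in
           if t_idx st v is None then strongconnect #|T|.+1 v st else st)
        tarjan_init vs.

End Tarjan.

(* Total cost of Phase 1 for agent u: flooding, Tarjan on the known graph, and the
   classification of u's SCC (one scan over the known edges, plus O(1)). *)
Definition phase1_cost (T : finType) (E : rel T) (u : T) : nat :=
  let K := final_known E u in
  flood_cost E u + t_ops (tarjan K (kvertices K u)) + (#|K| + 1).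

(* Main.v *)
Require Import Defs.
From mathcomp Require Import all_boot zify.
Set Implicit Arguments. Unset Strict Implicit. Unset Printing Implicit Defensive.

Section FL.
Variables (T : finType) (E : rel T).

Lemma knownS t v : known E t.+1 v = known E t v :|: \bigcup_(w | E w v) newly E t w.
Proof. by rewrite /known /newly /=; case: (know E t). Qed.
Lemma newlyS t v : newly E t.+1 v = known E t.+1 v :\: known E t v.
Proof. by rewrite /known /newly /=; case: (know E t). Qed.
Lemma newly0 v : newly E 0 v = known E 0 v.
Proof. by []. Qed.

Lemma known_sub t v : known E t v \subset known E t.+1 v.
Proof. by rewrite knownS subsetUl. Qed.

Lemma known_edges t : forall v, known E t v \subset edges E /\ newly E t v \subset edges E.
Proof.
elim: t => [|t IH] v.
  rewrite newly0; suff H : known E 0 v \subset edges E by [].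
  by apply/subsetP => e; rewrite /known /= inE => /andP[].
have HK : known E t.+1 v \subset edges E.
  rewrite knownS subUset (proj1 (IH v)) /=.
  by apply/bigcupsP => w _; exact: (proj2 (IH w)).
split=> //; rewrite newlyS; apply: subset_trans HK; exact: subsetDl.
Qed.

Lemma sum_newly N v : \sum_(t < N.+1) #|newly E t v| = #|known E N v|.
Proof.
elim: N => [|N IH]; first by rewrite big_ord_recr big_ord0 /= newly0.
rewrite big_ord_recr /= IH newlyS.
have := cardsID (known E N v) (known E N.+1 v).
by rewrite (setIidPr (known_sub N v)).
Qed.

Lemma stop_le u : stop_time E u <= #|edges E|.
Proof.
have H : forall t, t <= stop_time E u -> t <= #|known E t u|.
  elim=> [|t IH] // Ht.
  have := IH (ltnW Ht).
  have Hs : t < size (iota 0 (#|T| ^ 2).+1).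
    apply: leq_trans Ht _; exact: find_size.
  have := before_find 0 Ht; rewrite nth_iota; last by rewrite size_iota in Hs.
  rewrite add0n => Hne.
  have Hp : known E t u \proper known E t.+1 u.
    rewrite properEneq known_sub andbT; by rewrite eq_sym Hne.
  have := proper_card Hp; lia.
apply: leq_trans (H _ (leqnn _)) _.
apply: subset_leq_card; exact: (proj1 (known_edges _ _)).
Qed.

Lemma flood_bound u : flood_cost E u <=
   #|edges E|.+1 + #|edges E| + #|in_nbrs E u| * #|edges E|.
Proof.
rewrite /flood_cost !big_split /= sum_nat_const card_ord muln1.
rewrite sum_newly exchange_big /=.
have Hm : forall w, #|known E (stop_time E u) w| <= #|edges E|.
  move=> w; apply: subset_leq_card; exact: (proj1 (known_edges _ _)).
have H2 : \sum_(w | E w u) \sum_(t < (stop_time E u).+1) #|newly E t w|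
          <= #|in_nbrs E u| * #|edges E|.
  rewrite (eq_bigl (fun w => w \in in_nbrs E u)); last by move=> w; rewrite inE.
  rewrite -sum_nat_const; apply: leq_sum => w _; rewrite sum_newly; exact: Hm.
apply: leq_add; last exact: H2. apply: leq_add; [by rewrite ltnS stop_le | exact: Hm].
Qed.
End FL.
Section TJ.
Variables (T : finType) (K : {set T * T}).
Definition Vs (s : tstate T) : {set T} := [set x | t_idx s x != None].
Definition wt (x : T) := (size (adj K x)).+2.
Definition Pp (s : tstate T) := \sum_(x in Vs s) wt x.
Definition Qq (s : tstate T) := t_ops s + size (t_stk s).

Lemma upd_eq (A : Type) (f : T -> A) x a y : upd f x a y = if y == x then a else f y.
Proof. by []. Qed.
Lemma Qq_tick s : Qq (tick s) = (Qq s).+1. Proof. by rewrite /Qq /= addSn. Qed.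
Lemma Pp_tick s : Pp (tick s) = Pp s. Proof. by []. Qed.
Lemma Qq_set_low v n s : Qq (set_low v n s) = Qq s. Proof. by []. Qed.
Lemma Pp_set_low v n s : Pp (set_low v n s) = Pp s. Proof. by []. Qed.

Lemma sc_bound f v s : t_idx s v = None ->
  Qq (strongconnect K f v s) + Pp s <= Qq s + Pp (strongconnect K f v s).
Proof.
elim: f v s => [|f IH] v s hv /=; first by [].
set s1 := TState _ _ _ _ _ _.
set F := (fun st w => _).
have Hfold : forall l st, Qq (foldl F st l) + Pp st <= Qq st + Pp (foldl F st l) + size l.
  elim=> [|w l IHl] st /=; first by rewrite addn0.
  have H1 : Qq (F st w) + Pp st <= Qq st + Pp (F st w) + 1.
    rewrite /F; case E1: (t_idx (tick st) w) => [iw|].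
      by case: ifP => _; rewrite ?Qq_set_low ?Pp_set_low Qq_tick Pp_tick; lia.
    have := IH w (tick st) E1.
    rewrite Qq_set_low Pp_set_low Qq_tick Pp_tick; lia.
  have := IHl (F st w); lia.
have Hs1Q : Qq s1 = (Qq s).+2 by rewrite /Qq /= addnS addSn.
have Hs1V : Vs s1 = v |: Vs s.
  have E x : t_idx s1 x = if x == v then Some (t_cnt s) else t_idx s x by [].
  apply/setP=> x; rewrite !inE E; by case: (x == v).
have Hs1P : Pp s1 = wt v + Pp s.
  by rewrite /Pp Hs1V big_setU1 // inE hv.
have := Hfold (adj K v) s1.
set s2 := foldl F s1 (adj K v).
have Hpop : Qq (pop_comp v s2) = Qq s2 /\ Pp (pop_comp v s2) = Pp s2.
  split=> //; rewrite /Qq /= -addnA; congr (_ + _).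
  by rewrite -size_cat cat_take_drop.
rewrite Hs1Q Hs1P /wt.
case: ifP => _; [case: Hpop => -> -> |]; lia.
Qed.

Definition tstep (st : tstate T) (v : T) : tstate T :=
  let st := tick st in if t_idx st v is None then strongconnect K #|T|.+1 v st else st.

Lemma tarjan_bound vs : t_ops (tarjan K vs) <= \sum_x wt x + size vs.
Proof.
have H : forall l st, Qq (foldl tstep st l) + Pp st <= Qq st + Pp (foldl tstep st l) + size l.
  elim=> [|w l IHl] st /=; first by rewrite addn0.
  have H1 : Qq (tstep st w) + Pp st <= Qq st + Pp (tstep st w) + 1.
    rewrite /tstep; case E1: (t_idx (tick st) w) => [iw|].
      by rewrite Qq_tick Pp_tick; lia.
    have := sc_bound #|T|.+1 E1. rewrite Qq_tick Pp_tick; lia.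
  have := IHl (tstep st w); lia.
have := H vs (tarjan_init T).
have -> : tarjan K vs = foldl tstep (tarjan_init T) vs by [].
set fin := foldl _ _ _.
have -> : Qq (tarjan_init T) = 0 by [].
have -> : Pp (tarjan_init T) = 0.
  by rewrite /Pp big1 // => x; rewrite inE.
have HP : Pp fin <= \sum_x wt x.
  rewrite /Pp [X in _ <= X](bigID (fun x => x \in Vs fin)) /=; exact: leq_addr.
rewrite /Qq; lia.
Qed.

Lemma sum_wt : \sum_x wt x = (#|T|).*2 + #|K|.
Proof.
rewrite /wt.
have -> : \sum_x (size (adj K x)).+2 = \sum_x (size (adj K x) + 2).
  by apply: eq_bigr => x _; rewrite addn2.
rewrite big_split /= sum_nat_const cardT -/(#|T|) muln2 addnC; congr (_ + _).
have -> : \sum_x size (adj K x) = \sum_x \sum_(y | (x, y) \in K) 1.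
  apply: eq_bigr => x _; rewrite /adj size_filter -sum1_count.
  by rewrite big_enum_cond; apply: eq_bigl => y; rewrite inE.
rewrite pair_big_dep /= -sum1_card; apply: eq_bigl => -[a b] //.
Qed.
End TJ.

Theorem proposition3 :
  exists C : nat, forall (T : finType) (E : rel T) (u : T),
    phase1_cost E u <= C * maxn (#|in_nbrs E u| * #|edges E|) (#|T| + #|edges E|).
Proof.
exists 6 => T E u.
rewrite /phase1_cost.
set K := final_known E u.
have HK : #|K| <= #|edges E|.
  apply: subset_leq_card; exact: (proj1 (known_edges _ _ _)).
have Ht := tarjan_bound K (kvertices K u).
rewrite sum_wt in Ht.
have Hv : size (kvertices K u) <= #|T|.
  by rewrite /kvertices size_filter cardT count_size.
have Hf := flood_bound E u.
have Hn : 0 < #|T| by apply/card_gt0P; exists u.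
have H1 := leq_maxl (#|in_nbrs E u| * #|edges E|) (#|T| + #|edges E|).
have H2 := leq_maxr (#|in_nbrs E u| * #|edges E|) (#|T| + #|edges E|).
move: Ht Hv Hf H1 H2 HK Hn.
set X := maxn _ _. set dm := #|in_nbrs E u| * #|edges E|.
set tj := t_ops _. set fc := flood_cost E u. lia.
Qed.
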